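(* Let $n\ge 64$ be a power of $2$ and let $z\in\mathbb{R}^n$ satisfy $\sum_{i}z(i)=0$ and $\|z\|_1=2$, so that $\sum_i z^+(i)=1$. Suppose $$\sum_{j = 1}^{\log (n/32)} \sum_{i \in B_j(z^+)} z^+(i) \geq \frac35 .$$ Let $j$ be chosen uniformly at random from $\{1,\dots,\log(n/32)\}$, let $r=2^j$, and let $S\subseteq[n]$ include each element independently with probability $1/r$. Then with probability at least $\frac{3}{20\log(n/32)}$ there exists $i\in S$ with $z^+(i)\geq 1/r$.
   Context: $z^+(i)=\max(0,z(i))$. For a nonnegative vector $x\in\mathbb{R}^n$ and integer $j\ge1$, the $j$-th bin is $B_j(x)=\{i: 2^{-j}\le x(i)<2^{-j+1}\}$. $\log$ is base 2. *)

(* Defs.v *)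
From HB Require Import structures.
From mathcomp Require Import all_boot all_order all_algebra.
Set Implicit Arguments. Unset Strict Implicit. Unset Printing Implicit Defensive.
Import Order.TTheory GRing.Theory Num.Theory.
Local Open Scope ring_scope.

Definition zplus (R : realFieldType) (n : nat) (z : 'I_n -> R) (i : 'I_n) : R :=
  Num.max 0 (z i).

Definition bin (R : realFieldType) (n : nat) (x : 'I_n -> R) (j : nat) : {set 'I_n} :=
  [set i | ((2 : R) ^ (- (j%:Z)) <= x i) && (x i < (2 : R) ^ (- (j%:Z) + 1))].

(* probability of the outcome S when each element of [n] is included
   independently with probability p *)
Definition subset_weight (R : realFieldType) (n : nat) (p : R) (S : {set 'I_n}) : R :=
  (\prod_(i in S) p) * (\prod_(i in ~: S) (1 - p)).

(* Probability, over j uniform in {1,..,L}, r = 2^j, and S a (1/r)-random subset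
   of [n], that some i in S has x(i) >= 1/r. *)
Definition success_prob (R : realFieldType) (n : nat) (x : 'I_n -> R) (L : nat) : R :=
  (L%:R)^-1 * \sum_(1 <= j < L.+1)
     \sum_(S : {set 'I_n})
        subset_weight (((2 : R) ^+ j)^-1) S *
        (if [exists i in S, ((2 : R) ^+ j)^-1 <= x i] then 1 else 0).

(* Main.v *)
Require Import Defs.
From HB Require Import structures.
From mathcomp Require Import all_boot all_order all_algebra.
From mathcomp Require Import ring lra.
Import Order.TTheory GRing.Theory Num.Theory.
Local Open Scope ring_scope.

Section Aux.
Variable R : realFieldType.

Lemma prod_split n (F G : 'I_n -> R) (J : {set 'I_n}) :
  \prod_i (if i \in J then F i else G i) = (\prod_(i in J) F i) * \prod_(i in ~: J) G i.
Proof.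
rewrite (bigID (mem J)) /=; congr (_ * _).
  by apply: eq_bigr => i ->.
rewrite [RHS](eq_bigl (fun i => ~~ (i \in J))); last by move=> i; rewrite in_setC.
by apply: eq_bigr => i /negbTE ->.
Qed.

Lemma weight_sum n (p : R) : \sum_(S : {set 'I_n}) subset_weight p S = 1.
Proof.
have := @bigA_distr R 0 1 (@GRing.mul R) (@GRing.add R) _ (fun _ : 'I_n => p) (fun _ => 1 - p).
rewrite (eq_bigr (fun _ => 1)); last by move=> i _; change (p + (1 - p) = 1); rewrite addrC subrK.
rewrite big1_eq => ->; apply: eq_bigr => S _.
by rewrite prod_split.
Qed.

Lemma term_eq n (p : R) (x : 'I_n -> R) (S : {set 'I_n}) :
  subset_weight p S * (if [exists i in S, p <= x i] then 0 else 1)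
  = \prod_i (if i \in S then (if p <= x i then 0 else p) else 1 - p).
Proof.
case: existsP => [[i /andP [iS pi]]|nex].
  by rewrite mulr0 (bigD1 i) //= iS pi mul0r.
rewrite mulr1 /subset_weight -prod_split; apply: eq_bigr => i _.
case iS: (i \in S) => //; case pi: (p <= x i) => //.
by exfalso; apply: nex; exists i; rewrite iS pi.
Qed.

Lemma prob_exists n (p : R) (x : 'I_n -> R) :
  \sum_(S : {set 'I_n}) subset_weight p S * (if [exists i in S, p <= x i] then 1 else 0)
  = 1 - (1 - p) ^+ #|[set i | p <= x i]|.
Proof.
have E2 : \sum_(S : {set 'I_n}) subset_weight p S *
            (if [exists i in S, p <= x i] then 0 else 1)
          = (1 - p) ^+ #|[set i | p <= x i]|.
  have := @bigA_distr R 0 1 (@GRing.mul R) (@GRing.add R) _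
            (fun i : 'I_n => if p <= x i then 0 else p) (fun _ => 1 - p).
  move=> H.
  rewrite (eq_bigr (fun i => if i \in [set i | p <= x i] then 1 - p else 1)) in H;
    last by move=> i _; rewrite inE; case: (p <= x i); [change (0 + (1-p) = 1-p); rewrite add0r | change (p + (1 - p) = 1); rewrite addrC subrK].
  rewrite -big_mkcond prodr_const in H; rewrite H.
  apply: eq_bigr => S _; exact: term_eq.
have E3 : forall S : {set 'I_n}, subset_weight p S * (if [exists i in S, p <= x i] then 1 else 0)
   = subset_weight p S - subset_weight p S * (if [exists i in S, p <= x i] then 0 else 1).
  by move=> S; case: ([exists i in S, p <= x i]); rewrite ?mulr1 ?mulr0 ?subr0 ?subrr.
rewrite (eq_bigr _ (fun S _ => E3 S)) sumrB E2 weight_sum //.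
Qed.

Lemma bern (p : R) c : 0 <= p -> 1 + c%:R * p <= (1 + p) ^+ c.
Proof.
move=> hp; elim: c => [|c IH]; first by rewrite mul0r addr0 expr0.
rewrite exprSr -addn1 natrD.
have hc : 0 <= c%:R :> R by apply: ler0n.
have h1 : 0 <= c%:R * p * p by rewrite mulr_ge0 // mulr_ge0.
have h2 : (1 + c%:R * p) * (1 + p) <= (1 + p) ^+ c * (1 + p).
  by rewrite ler_wpM2r // addr_ge0.
apply: le_trans h2.
rewrite mulrDl mul1r !mulrDr !mulr1 !mulrDl !mul1r.
set a := c%:R * p. set b := a * p in h1 *.
lra.
Qed.

Lemma lb1 (p : R) c : 0 <= p -> p <= 1 ->
  c%:R * p / (1 + c%:R * p) <= 1 - (1 - p) ^+ c.
Proof.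
move=> h0 h1.
have ht : 0 <= c%:R * p by rewrite mulr_ge0.
have hq : (1 - p) ^+ c * (1 + c%:R * p) <= 1.
  apply: (le_trans (y := (1 - p) ^+ c * (1 + p) ^+ c)).
    by rewrite ler_wpM2l ?bern // exprn_ge0 // subr_ge0.
  rewrite -exprMn; apply: exprn_ile1.
    by rewrite mulr_ge0 // ?subr_ge0 // addr_ge0.
  have : 0 <= p * p by rewrite mulr_ge0.
  rewrite mulrDr mulr1 mulrBl mul1r; lra.
rewrite ler_pdivrMr; last lra.
move: hq; set q := (1 - p) ^+ c; set t := c%:R * p => hq.
rewrite mulrBl mul1r; lra.
Qed.

Lemma lb2 (m t : R) : 0 <= m -> m <= 2 -> m <= 2 * t -> m / 4 <= t / (1 + t).
Proof.
move=> h0 h1 h2.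
have ht : 0 <= t by lra.
rewrite ler_pdivlMr; last lra.
rewrite mulrAC ler_pdivrMr; last lra.
have : m * t <= 2 * t by rewrite ler_wpM2r.
rewrite mulrDr mulr1; lra.
Qed.

Lemma pj_bound n (x : 'I_n -> R) j :
  (forall i, 0 <= x i) -> \sum_i x i <= 2 ->
  (\sum_(i in bin x j) x i) / 4 <=
  \sum_(S : {set 'I_n}) subset_weight (((2 : R) ^+ j)^-1) S *
     (if [exists i in S, ((2 : R) ^+ j)^-1 <= x i] then 1 else 0).
Proof.
move=> hx hs; rewrite prob_exists.
set p := ((2 : R) ^+ j)^-1.
have h2 : 0 < (2 : R) ^+ j by rewrite exprn_gt0.
have hp0 : 0 <= p by rewrite invr_ge0 ltW.
have hp1 : p <= 1 by rewrite invf_le1 // exprn_ege1 // ler1n.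
apply: (le_trans _ (lb1 _ _ hp0 hp1)); apply: lb2.
- by apply: sumr_ge0 => i _.
- apply: (le_trans _ hs); rewrite [X in _ <= X](bigID (mem (bin x j))) /= lerDl.
  by apply: sumr_ge0 => i _.
- set A := [set i | p <= x i].
  have hb : forall i, i \in bin x j -> p <= x i /\ x i <= 2 * p.
    move=> i; rewrite inE => /andP [h1 h3]; split.
      by move: h1; rewrite -exprnN.
    apply: ltW; move: h3.
    by rewrite expfzDr ?expr1z ?pnatr_eq0 // -exprnN mulrC.
  apply: (le_trans (y := \sum_(i in bin x j) (2 * p))).
    by apply: ler_sum => i /hb [].
  rewrite sumr_const -(mulr_natl (2 * p)) mulrCA; apply: ler_wpM2l => //.
  apply: ler_wpM2r => //; rewrite ler_nat; apply: subset_leq_card; apply/subsetP => i /hb [hi _].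
  by rewrite inE.
Qed.

End Aux.

Theorem lemma4p3 (R : realFieldType) (k n : nat) (z : 'I_n -> R) :
  n = (2 ^ k)%N -> (64 <= n)%N ->
  \sum_(i < n) z i = 0 ->
  \sum_(i < n) `|z i| = 2 ->
  \sum_(1 <= j < (k - 5).+1) \sum_(i in bin (zplus z) j) zplus z i >= 3 / 5 ->
  success_prob (zplus z) (k - 5) >= 3 / (20 * (k - 5)%:R).
Proof.
move=> _ _ _ habs hbin.
have hx : forall i, 0 <= zplus z i by move=> i; rewrite /zplus le_max lexx.
have hs : \sum_i zplus z i <= 2.
  rewrite -habs; apply: ler_sum => i _; rewrite /zplus ge_max normr_ge0 ler_norm //.
rewrite /success_prob.
set L := (k - 5)%N.
have H1 : \sum_(1 <= j < L.+1) (\sum_(i in bin (zplus z) j) zplus z i) / 4 <=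
  \sum_(1 <= j < L.+1) \sum_(S : {set 'I_n}) subset_weight (((2 : R) ^+ j)^-1) S *
     (if [exists i in S, ((2 : R) ^+ j)^-1 <= zplus z i] then 1 else 0).
  by apply: ler_sum => j _; apply: pj_bound.
rewrite -mulr_suml in H1.
have -> : 3 / (20 * L%:R) = L%:R^-1 * (3 / 20 : R).
  by rewrite invfM [LHS]mulrA [LHS]mulrC.
apply: ler_wpM2l; first by rewrite invr_ge0 ler0n.
apply: (le_trans _ H1); rewrite ler_pdivlMr; last lra.
apply: (le_trans _ hbin); lra.
Qed.
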